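(* Let $d$, $n$, $r$ be positive integers with $\gcd(d,n)=1$ and $n$ odd. Then, modulo $(1-aq^{r+d\langle-r/d\rangle_n})(a-q^{d-r+d\langle (r-d)/d\rangle_n})$, $$ \sum_{k=0}^{n-1}\frac{2\,(aq^r;q^d)_k\,(q^{d-r}/a;q^d)_k\, q^{dk}}{(q^d;q^d)_{k}^2\,(1+q^{dk})} \equiv (-1)^{\langle-r/d\rangle_n}. $$
   Context: $a,q$ are indeterminates. The $q$-shifted factorial is $(y;q)_0=1$ and $(y;q)_m=(1-y)(1-yq)\cdots(1-yq^{m-1})$ for $m\geqslant1$. $\langle y\rangle_m$ denotes the least non-negative residue modulo $m$ of a rational number $y$ whose denominator is coprime to $m$. For rational functions $A,B$ and a polynomial $P$, $A\equiv B\pmod P$ means $A-B=P\cdot C/D$ for polynomials $C,D$ with $D$ coprime to $P$. *)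

(* Defs.v *)
From HB Require Import structures.
From mathcomp Require Import all_boot all_order all_algebra.
Set Implicit Arguments. Unset Strict Implicit. Unset Printing Implicit Defensive.
Import Order.TTheory GRing.Theory Num.Theory.
Local Open Scope ring_scope.

(* Polynomial ring Q[a,q], represented as ({poly rat})[a]: the outer
   variable is a, the inner variable (coefficients) is q. *)
Definition Rpoly : Type := {poly {poly rat}}.
Definition Ffrac : fieldType := {fraction Rpoly}.

Notation tof := (@FracField.tofrac Rpoly).
Notation "x %:F" := (tof x).

Definition aR : Rpoly := 'X.
Definition qR : Rpoly := ('X : {poly rat})%:P.
Definition aF : Ffrac := aR%:F.
Definition qF : Ffrac := qR%:F.

Definition qpoch (y q : Ffrac) (m : nat) : Ffrac :=
  \prod_(i < m) (1 - y * q ^+ i).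

(* <y>_m : least nonnegative x < m with x = y mod m, i.e. m | denq y * x - numq y
   (returns m if no such x; it exists when the denominator is coprime to m) *)
Definition resid (y : rat) (m : nat) : nat :=
  find (fun x : nat => (m%:Z %| (denq y * x%:Z - numq y))%Z) (iota 0 m).

Definition pdvd (E P : Rpoly) : Prop := exists G : Rpoly, P = E * G.
Definition pcoprime (P D : Rpoly) : Prop :=
  forall E : Rpoly, pdvd E P -> pdvd E D -> E \is a GRing.unit.

Definition congr_mod (A B : Ffrac) (P : Rpoly) : Prop :=
  exists C D : Rpoly, D != 0 /\ pcoprime P D /\ A - B = P%:F * C%:F / D%:F.

(* The factor (a - q^z) for an integer z, as a polynomial: if z < 0 it is
   normalised by the unit q^(-z) of Q[a,q,q^-1] to a*q^(-z) - 1. *)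
Definition a_minus_qpow (z : int) : Rpoly :=
  match z with
  | Posz k => aR - qR ^+ k
  | Negz k => aR * qR ^+ k.+1 - 1
  end.

(* Main.v *)
Require Import Defs.
From HB Require Import structures.
From mathcomp Require Import all_boot all_order all_algebra.
From mathcomp Require Import ring lra zify.
Import Order.TTheory GRing.Theory Num.Theory.
Local Open Scope ring_scope.
Lemma alg_tele (K : fieldType) (a b P pk w pp : K) : P != 0 -> 1 - pp * pk != 0 -> 1 - w != 0 -> 1 - w^-1 != 0 -> w != 0 ->
 a * b * pk / P ^+ 2 =
 a * (1 - w^-1 * pk) * (b * (1 - w * pk)) * (1 - pp * pk) ^+ 2 / ((P * (1 - pp * pk)) ^+ 2 * ((1 - w) * (1 - w^-1))) -
 a * b * (1 - pk) ^+ 2 / (P ^+ 2 * ((1 - w) * (1 - w^-1))).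
Proof.
move=> h1 h2 h3 h4 h5; field.
have h6 : w - 1 != 0 by rewrite -opprB oppr_eq0.
by rewrite h1 h2 h3 h5 h6.
Qed.

Lemma alg_T (K : fieldType) (a a' b b' P pk w : K) : P != 0 -> 1 + pk != 0 -> 1 - w != 0 -> 1 - w^-1 != 0 -> w != 0 ->
  (1 - w^-1) * a' = a * (1 - w^-1 * pk) -> (1 - w) * b = b' * (1 - w * pk) ->
  2 * a * b * pk / (P ^+ 2 * (1 + pk)) + 2 * a' * b' * pk / (P ^+ 2 * (1 + pk)) = 2 * (a * b' * pk / P ^+ 2).
Proof.
move=> h1 h2 h3 h4 h5 ea eb.
have -> : a' = a * (1 - w^-1 * pk) / (1 - w^-1) by rewrite -ea mulrAC mulfV ?mul1r.
have -> : b = b' * (1 - w * pk) / (1 - w) by rewrite -eb mulrAC mulfV ?mul1r.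
field.
have h6 : w - 1 != 0 by rewrite -opprB oppr_eq0.
by rewrite h1 h2 h3 h5 h6.
Qed.
Local Notation F := Ffrac.

Lemma qpS (y p : F) k : qpoch y p k.+1 = qpoch y p k * (1 - y * p ^+ k).
Proof. by rewrite /qpoch big_ord_recr. Qed.

Lemma qpSl (y p : F) k : qpoch y p k.+1 = (1 - y) * qpoch (y * p) p k.
Proof.
rewrite /qpoch big_ord_recl expr0 mulr1; congr (_ * _).
by apply: eq_bigr => i _; rewrite exprS mulrA.
Qed.

Lemma qp0 (y p : F) : qpoch y p 0 = 1.
Proof. by rewrite /qpoch big_ord0. Qed.

Lemma qp_zero (y p : F) s N : y * p ^+ s = 1 -> (s < N)%N -> qpoch y p N = 0.
Proof.
move=> h lt; apply/eqP/prodf_eq0; exists (Ordinal lt) => //=.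
by rewrite h subrr.
Qed.

Lemma qp_neq0 (y p : F) N : (forall i, (i < N)%N -> y * p ^+ i != 1) -> qpoch y p N != 0.
Proof.
move=> h; apply/prodf_neq0 => i _; rewrite subr_eq0 eq_sym; exact: h.
Qed.

Section QId2.
Variable p : F.
Hypothesis p0 : p != 0.
Hypothesis hp : forall m, (0 < m)%N -> p ^+ m != 1.
Lemma Pk_neq0 k : qpoch p p k != 0.
Proof. apply: qp_neq0 => i _; rewrite -exprS; exact: hp. Qed.
Lemma Usum s N : (0 < s)%N -> (s < N)%N ->
  \sum_(k < N) qpoch (p ^+ s)^-1 p k * qpoch (p ^+ s) p k * p ^+ k / (qpoch p p k) ^+ 2 = 0.
Proof.
move=> s0 sN.
set w := p ^+ s.
have w0 : w != 0 by rewrite expf_neq0.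
have w1 : 1 - w != 0 by rewrite subr_eq0 eq_sym hp.
have u1 : 1 - w^-1 != 0.
  rewrite subr_eq0; apply/negP => /eqP h.
  by move: w1; rewrite -[w]invrK -h invr1 subrr eqxx.
pose G k := qpoch w^-1 p k * qpoch w p k * (1 - p ^+ k) ^+ 2
   / ((qpoch p p k) ^+ 2 * ((1 - w) * (1 - w^-1))).
have -> : \sum_(k < N) qpoch w^-1 p k * qpoch w p k * p ^+ k / (qpoch p p k) ^+ 2
   = \sum_(0 <= k < N) (G k.+1 - G k).
  rewrite big_mkord; apply: eq_bigr => k _.
  rewrite /G !qpS [p ^+ k.+1]exprS.
  have hk : 1 - p * p ^+ k != 0 by rewrite subr_eq0 eq_sym -exprS hp.
  exact: alg_tele (Pk_neq0 k) hk w1 u1 w0.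
rewrite telescope_sumr // /G.
have hz : qpoch w^-1 p N = 0 by apply: (@qp_zero _ _ s N _ sN); exact: mulVf w0.
rewrite hz expr0 subrr.
by rewrite expr0n !mul0r !mulr0 !mul0r subr0.
Qed.


Hypothesis two0 : (2 : F) != 0.

Lemma onep_neq0 k : 1 + p ^+ k != 0.
Proof.
case: k => [|k]; first by rewrite expr0.
apply/negP => /eqP h.
have h1 : p ^+ k.+1 = -1 by apply/eqP; rewrite -addr_eq0 addrC h.
have : p ^+ (k.+1 * 2) != 1 by apply: hp.
by rewrite exprM h1 sqrrN expr1n eqxx.
Qed.

Definition Tt (s k : nat) : F :=
  2 * qpoch (p ^+ s)^-1 p k * qpoch (p ^+ s * p) p k * p ^+ k
  / ((qpoch p p k) ^+ 2 * (1 + p ^+ k)).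

Lemma Tsum s N : (s < N)%N -> \sum_(k < N) Tt s k = (-1) ^+ s.
Proof.
elim: s => [|s IH] sN.
  case: N sN => // N _.
  rewrite big_ord_recl big1 ?addr0.
    rewrite /Tt expr0 invr1 mul1r !qp0 !mulr1 expr1n mul1r.
    exact: mulfV.
  move=> i _; rewrite /Tt expr0 invr1.
  have -> : qpoch 1 p (bump 0 i) = 0.
    apply: (@qp_zero _ _ 0 _ _ (ltn0Sn _)); exact: mulr1.
  by rewrite mulr0 !mul0r.
have sN' : (s < N)%N by apply: ltnW.
have e : \sum_(k < N) Tt s.+1 k = - \sum_(k < N) Tt s k.
  apply/eqP; rewrite -addr_eq0 -big_split /=.
  set w := p ^+ s.+1.
  have w0 : w != 0 by exact: expf_neq0 p0.
  have w1 : 1 - w != 0 by rewrite subr_eq0 eq_sym hp.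
  have u1 : 1 - w^-1 != 0.
    rewrite subr_eq0; apply/negP => /eqP h.
    by move: w1; rewrite -[w]invrK -h invr1 subrr eqxx.
  have ew : p ^+ s * p = w by rewrite /w exprSr.
  have eu : (p ^+ s)^-1 = w^-1 * p.
    by rewrite -ew invfM mulfVK.
  apply/eqP.
  have hU := @Usum s.+1 N (ltn0Sn s) sN.
  transitivity (2 * \sum_(k < N) qpoch (p ^+ s.+1)^-1 p k * qpoch (p ^+ s.+1) p k * p ^+ k / qpoch p p k ^+ 2); last by rewrite hU mulr0.
  rewrite mulr_sumr; apply: eq_bigr => k _.
  rewrite /Tt eu ew -/w.
  apply: alg_T (Pk_neq0 k) (onep_neq0 k) w1 u1 w0 _ _.
    by rewrite -qpSl qpS.
  by rewrite -qpSl qpS.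
by rewrite e IH // exprS mulN1r.
Qed.

End QId2.
Lemma exists_sol (d n r : nat) : (0 < n)%N -> coprime d n ->
  exists x, (x < n)%N /\ (n %| d * x + r)%N.
Proof.
move=> n0 cp; case: (Bezoutl d n0) => a _ ha.
rewrite gcdnC (eqP cp) in ha.
exists ((a * r) %% n)%N; split; first by rewrite ltn_mod.
rewrite /dvdn -modnDml modnMmr modnDml.
have -> : (d * (a * r) + r = (1 + a * d) * r)%N by ring.
by rewrite -modnMml (eqP ha) mul0n mod0n.
Qed.

Lemma uniq_sol (d n : nat) (N : int) x x' : coprime d n -> (x < n)%N -> (x' < n)%N ->
  (n%:Z %| d%:Z * x%:Z + N)%Z -> (n%:Z %| d%:Z * x'%:Z + N)%Z -> x = x'.
Proof.
move=> cp xn xn' h1 h2.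
have h3 : (n%:Z %| d%:Z * (x%:Z - x'%:Z))%Z.
  have -> : d%:Z * (x%:Z - x'%:Z) = (d%:Z * x%:Z + N) - (d%:Z * x'%:Z + N) by ring.
  exact: rpredB.
rewrite Gauss_dvdzr in h3; last by rewrite coprimezE /= coprime_sym.
case/dvdzP: h3 => -[] k hq.
- case: k hq => [|k] hq; first by lia. nia.
- nia.
Qed.

Lemma resid_pred (y : rat) (d n : nat) (N : int) x : (0 < d)%N -> coprime d n ->
  y * d%:Q = - N%:~R ->
  (n%:Z %| denq y * x%:Z - numq y)%Z = (n%:Z %| d%:Z * x%:Z + N)%Z.
Proof.
move=> d0 cp hy.
set D := denq y; set M := numq y.
have hMD : M * d%:Z = - N * D.
  apply: (@intr_inj rat); rewrite !rmorphM /= numqE -/D mulrAC.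
  by rewrite -pmulrn hy rmorphN.
have hDd : (D %| d%:Z)%Z.
  have : (D %| M * d%:Z)%Z by rewrite hMD dvdz_mull.
  rewrite Gauss_dvdzr //.
  by rewrite coprimezE coprime_sym coprime_num_den.
have cpD : coprimez D n.
  rewrite coprimezE /=; apply: (coprime_dvdl _ cp).
  by move: hDd; rewrite /dvdz.
have key : d%:Z * (D * x%:Z - M) = D * (d%:Z * x%:Z + N).
  have -> : d%:Z * (D * x%:Z - M) = D * d%:Z * x%:Z - M * d%:Z by ring.
  rewrite hMD; ring.
apply/idP/idP => h.
- have : (n%:Z %| D * (d%:Z * x%:Z + N))%Z by rewrite -key dvdz_mull.
  by rewrite Gauss_dvdzr // coprimez_sym.
- have : (n%:Z %| d%:Z * (D * x%:Z - M))%Z by rewrite key dvdz_mull.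
  by rewrite Gauss_dvdzr // coprimezE /= coprime_sym.
Qed.

Lemma resid_eq (y : rat) (d n : nat) (N : int) x : (0 < d)%N -> coprime d n ->
  y * d%:Q = - N%:~R -> (x < n)%N -> (n%:Z %| d%:Z * x%:Z + N)%Z -> resid y n = x.
Proof.
move=> d0 cp hy xn hx.
have E := fun x0 => @resid_pred y d n N x0 d0 cp hy.
rewrite /resid.
set pr := (fun x0 : nat => _).
have hh : has pr (iota 0 n).
  apply/hasP; exists x; first by rewrite mem_iota.
  by rewrite /pr E.
have lt : (find pr (iota 0 n) < n)%N by rewrite -[X in (_ < X)%N](size_iota 0 n) -has_find.
have := nth_find 0 hh; rewrite nth_iota // add0n /pr E => h.
exact: (@uniq_sol d n N _ _ cp lt xn h hx).
Qed.
Lemma L0 (R : idomainType) (E : {poly R}) (c : R) m : forall G : {poly R},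
  E * G = c%:P * 'X^m -> E.[0] != 0 -> c != 0 -> size E = 1%N.
Proof.
elim: m => [|m IH] G h e0 c0.
  have E0 : E != 0 by apply: contra e0 => /eqP ->; rewrite horner0.
  have G0 : G != 0.
    apply/negP => /eqP G0; move: h; rewrite G0 mulr0 expr0 mulr1 => /esym/eqP.
    by rewrite polyC_eq0 (negbTE c0).
  have := congr1 (fun p : {poly R} => size p) h; rewrite /=; rewrite expr0 mulr1 size_polyC c0 size_mul //.
  have := size_poly_gt0 E; have := size_poly_gt0 G; rewrite E0 G0 /=.
  move=> *; lia.
have h0 : G.[0] = 0.
  move: h; rewrite exprSr mulrA => /(congr1 (fun p => p.[0])).
  rewrite /= hornerM hornerMX mulr0.
  by move/eqP; rewrite mulf_eq0 (negbTE e0) /= => /eqP.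
have : root G 0 by apply/eqP.
case/factor_theorem => G' hG.
apply: (IH G') => //.
apply: (@mulIf _ 'X); first by rewrite polyX_eq0.
have hG' : G = G' * 'X by rewrite hG polyC0 subr0.
by rewrite -mulrA -hG' h exprSr mulrA.
Qed.
Lemma unit_of_size1 (e : {poly rat}) : size e = 1%N -> e \is a GRing.unit.
Proof.
move=> h; rewrite poly_unitE h eqxx /= unitfE.
have : e != 0 by rewrite -size_poly_eq0 h.
by rewrite -lead_coef_eq0 lead_coefE h.
Qed.

Lemma hev0 (R : idomainType) (e h w : R) : e * h = w -> w != 0 -> e != 0.
Proof.
move=> eh; apply: contra => /eqP e0.
by rewrite -eh e0 mul0r.
Qed.

Lemma P_coprime A (Bz : int) (v : {poly rat}) m : (0 < A)%N -> v != 0 ->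
  pcoprime ((1 - aR * qR ^+ A) * a_minus_qpow Bz) (v%:P * aR ^+ m).
Proof.
move=> A0 v0 E [G1 hP] [G2 hD].
set P := (_ * _) in hP.
have P0 : P.[0] = (a_minus_qpow Bz).[0].
  by rewrite /P hornerM hornerD hornerN hornerC hornerM hornerX mul0r subr0 mul1r.
have E0 : E.[0] != 0.
  apply: (@hev0 _ _ G1.[0] P.[0]); first by rewrite hP hornerM.
  rewrite P0; case: Bz {hP P P0} => k /=.
    rewrite hornerD hornerN hornerX /qR -rmorphXn hornerC sub0r oppr_eq0 expf_neq0 //.
    by rewrite polyX_eq0.
  rewrite hornerD hornerN hornerM hornerX hornerC mul0r add0r oppr_eq0.
  exact: oner_neq0.
have sE : size E = 1%N.
  exact: (@L0 _ E v m G2).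
have eE : E = (E`_0)%:P by apply: size1_polyC; rewrite sE.
rewrite poly_unitE sE eqxx /=.
apply: unit_of_size1.
set e := E`_0.
move: hP; rewrite eE => hP.
have ev c : P.[c] = e * G1.[c] by rewrite hP hornerCM.
case: Bz {eE} @P hP P0 ev => [[|k]|k] P hP P0 ev.
- have h0 : e * (- G1.[0]) = 1%:P * 'X^0.
    rewrite expr0 mulr1 mulrN -ev P0 /= hornerD hornerN hornerX.
    by rewrite /qR expr0 hornerC sub0r opprK.
  apply: (@L0 _ _ _ _ _ h0); rewrite ?oner_neq0 //.
  apply: (@hev0 _ _ (- G1.[0]).[0] 1); last by rewrite oner_neq0.
  by rewrite -hornerM h0 expr0 mulr1 hornerC.
- have h0 : e * (- G1.[0]) = 1%:P * 'X^(k.+1).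
    rewrite mul1r mulrN -ev P0 /= hornerD hornerN hornerX.
    by rewrite /qR -rmorphXn hornerC sub0r opprK.
  apply: (@L0 _ _ _ _ _ h0); rewrite ?oner_neq0 //.
  apply: (@hev0 _ _ G1.[1].[0] 1); last by rewrite oner_neq0.
  rewrite -hornerM -ev /P /= !(hornerD, hornerN, hornerM, hornerX, hornerC).
  rewrite /qR -!rmorphXn !hornerC.
  rewrite !(hornerD, hornerN, hornerM, hornerXn, hornerC) expr0n /= expr0n /=.
  by rewrite (negbTE (lt0n_neq0 A0)) mulr0 !subr0 mulr1.
- have h0 : e * (- G1.[0]) = (1)%:P * 'X^0.
    rewrite expr0 mulr1 mulrN -ev P0 /= hornerD hornerN hornerM hornerX.
    by rewrite hornerC mul0r sub0r opprK.
  apply: (@L0 _ _ _ _ _ h0); rewrite ?oner_neq0 //.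
  apply: (@hev0 _ _ (- G1.[0]).[0] 1); last by rewrite oner_neq0.
  by rewrite -hornerM h0 expr0 mulr1 hornerC.
Qed.
Lemma gen_add (K : fieldType) (c1 c2 e1 e2 : K) : e1 != 0 -> e2 != 0 ->
  c1 / e1 + c2 / e2 = (c1 * e2 + c2 * e1) / (e1 * e2).
Proof. move=> h1 h2; field; by rewrite h1 h2. Qed.

Lemma gen_mul (K : fieldType) (c1 c2 e1 e2 : K) :
  c1 / e1 * (c2 / e2) = (c1 * c2) / (e1 * e2).
Proof. by rewrite mulf_div. Qed.

Definition good (f : Ffrac) := exists C : Rpoly, exists v : {poly rat}, exists m : nat,
  v != 0 /\ f = C%:F / (v%:P * aR ^+ m)%:F.

Lemma den_neq0 (v : {poly rat}) m : v != 0 -> (v%:P * aR ^+ m : Rpoly) != 0.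
Proof.
move=> v0; rewrite mulf_neq0 ?polyC_eq0 //.
by rewrite expf_neq0 // /aR polyX_eq0.
Qed.

Lemma denM (v1 v2 : {poly rat}) m1 m2 :
  ((v1 * v2)%:P * aR ^+ (m1 + m2) : Rpoly) = (v1%:P * aR ^+ m1) * (v2%:P * aR ^+ m2).
Proof. by rewrite polyCM exprD mulrACA. Qed.

Lemma good_tof (C : Rpoly) : good C%:F.
Proof.
exists C, 1, 0%N; split; first exact: oner_neq0.
by rewrite polyC1 expr0 mulr1 tofrac1 divr1.
Qed.

Lemma good0 : good 0.
Proof. by rewrite -tofrac0; apply: good_tof. Qed.

Lemma good1 : good 1.
Proof. by rewrite -tofrac1; apply: good_tof. Qed.

Lemma good_add f g : good f -> good g -> good (f + g).
Proof.
move=> [C1 [v1 [m1 [h1 ->]]]] [C2 [v2 [m2 [h2 ->]]]].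
exists (C1 * (v2%:P * aR ^+ m2) + C2 * (v1%:P * aR ^+ m1)), (v1 * v2), (m1 + m2)%N.
split; first by rewrite mulf_neq0.
rewrite denM !tofracM tofracD !tofracM.
by rewrite gen_add // -tofracM tofrac_eq0 den_neq0.
Qed.

Lemma good_mul f g : good f -> good g -> good (f * g).
Proof.
move=> [C1 [v1 [m1 [h1 ->]]]] [C2 [v2 [m2 [h2 ->]]]].
exists (C1 * C2), (v1 * v2), (m1 + m2)%N.
split; first by rewrite mulf_neq0.
by rewrite denM !tofracM gen_mul.
Qed.

Lemma good_opp f : good f -> good (- f).
Proof.
move=> [C1 [v1 [m1 [h1 ->]]]]; exists (- C1), v1, m1; split => //.
by rewrite tofracN mulNr.
Qed.

Lemma good_sub f g : good f -> good g -> good (f - g).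
Proof. by move=> hf hg; apply: good_add => //; apply: good_opp. Qed.

Lemma good_exp f k : good f -> good (f ^+ k).
Proof.
move=> hf; elim: k => [|k IH]; first by rewrite expr0; exact: good1.
by rewrite exprS; apply: good_mul.
Qed.

Lemma good_inv (v : {poly rat}) m : v != 0 -> good ((v%:P * aR ^+ m)%:F)^-1.
Proof.
move=> v0; exists 1, v, m; split => //.
by rewrite tofrac1 div1r.
Qed.

Lemma good_sum (I : Type) (s : seq I) (P : pred I) (F : I -> Ffrac) :
  (forall i, P i -> good (F i)) -> good (\sum_(i <- s | P i) F i).
Proof.
move=> h; apply: (big_ind good) => //; [exact: good0 | exact: good_add].
Qed.

Lemma good_prod (I : Type) (s : seq I) (P : pred I) (F : I -> Ffrac) :
  (forall i, P i -> good (F i)) -> good (\prod_(i <- s | P i) F i).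
Proof.
move=> h; apply: (big_ind good) => //; [exact: good1 | exact: good_mul].
Qed.

Definition qgood (f : Ffrac) := exists v : {poly rat}, f = (v%:P : Rpoly)%:F.

Lemma qgood_good f : qgood f -> good f.
Proof. by case=> v ->; apply: good_tof. Qed.

Lemma qgood_add f g : qgood f -> qgood g -> qgood (f + g).
Proof. by move=> [v ->] [w ->]; exists (v + w); rewrite polyCD tofracD. Qed.

Lemma qgood_mul f g : qgood f -> qgood g -> qgood (f * g).
Proof. by move=> [v ->] [w ->]; exists (v * w); rewrite polyCM tofracM. Qed.

Lemma qgood_opp f : qgood f -> qgood (- f).
Proof. by move=> [v ->]; exists (- v); rewrite polyCN tofracN. Qed.

Lemma qgood1 : qgood 1.
Proof. by exists 1; rewrite polyC1 tofrac1. Qed.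

Lemma qgood_nat k : qgood k%:R.
Proof. by exists k%:R; rewrite (rmorph_nat polyC) (rmorph_nat (@tofrac Rpoly)). Qed.

Lemma qgood_sub f g : qgood f -> qgood g -> qgood (f - g).
Proof. by move=> hf hg; apply: qgood_add => //; apply: qgood_opp. Qed.

Lemma qgood_exp f k : qgood f -> qgood (f ^+ k).
Proof.
move=> hf; elim: k => [|k IH]; first by rewrite expr0; exact: qgood1.
by rewrite exprS; apply: qgood_mul.
Qed.

Lemma qgood_prod (I : Type) (s : seq I) (P : pred I) (F : I -> Ffrac) :
  (forall i, P i -> qgood (F i)) -> qgood (\prod_(i <- s | P i) F i).
Proof.
move=> h; apply: (big_ind qgood) => //; [exact: qgood1 | exact: qgood_mul].
Qed.

Lemma qgoodq : qgood qF.
Proof. by exists 'X. Qed.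

Lemma good_invq f : qgood f -> good f^-1.
Proof.
case=> v ->; have [->|v0] := eqVneq v 0.
  by rewrite polyC0 tofrac0 invr0; exact: good0.
by have := @good_inv v 0 v0; rewrite expr0 mulr1.
Qed.

Lemma goodA : good aF.
Proof. exact: good_tof. Qed.

Lemma good_invA : good aF^-1.
Proof. by have := @good_inv 1 1 (oner_neq0 _); rewrite polyC1 mul1r expr1. Qed.
Lemma gen_div_id (R : comRingType) (g X P C K : R) :
  (g * (X - C) + P) * X + K = (g * X + P) * (X - C) + (P * C + K).
Proof. ring. Qed.

Definition PG (g : {poly Ffrac}) := forall i, good g`_i.

Lemma PG0 : PG 0.
Proof. by move=> i; rewrite coef0; exact: good0. Qed.

Lemma PGC c : good c -> PG c%:P.
Proof. by move=> hc i; rewrite coefC; case: (i == 0)%N => //; exact: good0. Qed.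

Lemma PGX : PG 'X.
Proof. by move=> i; rewrite coefX; case: (i == 1)%N; [exact: good1 | exact: good0]. Qed.

Lemma PGD p q : PG p -> PG q -> PG (p + q).
Proof. by move=> hp hq i; rewrite coefD; apply: good_add. Qed.

Lemma PGN p : PG p -> PG (- p).
Proof. by move=> hp i; rewrite coefN; apply: good_opp. Qed.

Lemma PGB p q : PG p -> PG q -> PG (p - q).
Proof. by move=> hp hq; apply: PGD => //; apply: PGN. Qed.

Lemma PGM p q : PG p -> PG q -> PG (p * q).
Proof.
move=> hp hq i; rewrite coefM; apply: good_sum => j _; exact: good_mul.
Qed.

Lemma PGZ c p : good c -> PG p -> PG (c *: p).
Proof. by move=> hc hp i; rewrite coefZ; apply: good_mul. Qed.

Lemma PG_sum (I : Type) (s : seq I) (P : pred I) (F : I -> {poly Ffrac}) :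
  (forall i, P i -> PG (F i)) -> PG (\sum_(i <- s | P i) F i).
Proof.
move=> h; apply: (big_ind PG) => //; [exact: PG0 | exact: PGD].
Qed.

Lemma PG_prod (I : Type) (s : seq I) (P : pred I) (F : I -> {poly Ffrac}) :
  (forall i, P i -> PG (F i)) -> PG (\prod_(i <- s | P i) F i).
Proof.
move=> h; apply: (big_ind PG) => //; [by rewrite -polyC1; apply: PGC; exact: good1 | exact: PGM].
Qed.

Lemma good_horner p c : PG p -> good c -> good p.[c].
Proof.
move=> hp hc; rewrite horner_coef; apply: good_sum => i _.
by apply: good_mul => //; apply: good_exp.
Qed.

Lemma PG_div p c : PG p -> good c ->
  exists g, PG g /\ p = g * ('X - c%:P) + (p.[c])%:P.
Proof.
move=> + hc; elim/poly_ind: p => [|p k IH] hp.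
  exists 0; split; first exact: PG0.
  by rewrite mul0r horner0 add0r.
have hp' : PG p.
  move=> i; have := hp i.+1; by rewrite coefD coefMX coefC /= addr0.
have hk : good k.
  have := hp 0%N; by rewrite coefD coefMX coefC /= add0r.
case: (IH hp') => g [hg eg].
exists (g * 'X + (p.[c])%:P); split.
  apply: PGD; [exact: PGM hg PGX | apply: PGC; exact: good_horner].
rewrite hornerMXaddC [p in LHS]eg.
rewrite polyCD polyCM; exact: gen_div_id.
Qed.

Lemma PG_factor p c : PG p -> good c -> p.[c] = 0 ->
  exists g, PG g /\ p = g * ('X - c%:P).
Proof.
move=> hp hc h0; case: (@PG_div p c hp hc) => g [hg eg].
by exists g; split => //; rewrite eg h0 addr0.
Qed.
Lemma gen_r (K : fieldType) (two pk D a b : K) : two * pk / D * (a * b) = two * a * b * pk / D.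
Proof. ring. Qed.
Lemma gzd (K : fieldType) (x U Q : K) : x != 0 -> U != 0 ->
  x + Q / x - (U^-1 + Q / U^-1) = - (1 - x * U) * (x - Q * U) / (U * x).
Proof. move=> x0 U0. field. by rewrite x0 U0 oner_neq0. Qed.
Lemma gzz (K : fieldType) (U V Q : K) : U != 0 -> V != 0 ->
  (U^-1 + Q / U^-1) - (V^-1 + Q / V^-1) = (U^-1 - V^-1) * (1 - Q * U * V).
Proof. move=> U0 V0. field. by rewrite U0 V0 oner_neq0. Qed.
Lemma gas2 (K : fieldType) (g x U V Q : K) :
  g * (- (1 - x * U) * (x - Q * U) / (U * x)) * (- (1 - x * V) * (x - Q * V) / (V * x))
  = (1 - x * U) * (x - Q * V) * (g * (x - Q * U) * (1 - x * V) / (U * x) / (V * x)).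
Proof. ring. Qed.
Lemma gas1 (K : fieldType) (g x U Q : K) :
  g * (- (1 - x * U) * (x - Q * U) / (U * x))
  = (1 - x * U) * (x - Q * U) * (- g / (U * x)).
Proof. ring. Qed.
Lemma qF_neq0 : qF != 0.
Proof. by rewrite tofrac_eq0 polyC_eq0 polyX_eq0. Qed.

Lemma aF_neq0 : aF != 0.
Proof. by rewrite tofrac_eq0 /aR polyX_eq0. Qed.

Lemma qFX k : qF ^+ k = (('X^k : {poly rat})%:P : Rpoly)%:F.
Proof. by rewrite /qF /qR (rmorphXn (@polyC _)) (rmorphXn (@tofrac Rpoly)). Qed.

Lemma qF_pow_neq1 m : (0 < m)%N -> qF ^+ m != 1.
Proof.
move=> m0; rewrite qFX -tofrac1 tofrac_eq.
apply/negP => /eqP /(congr1 (fun p : Rpoly => p`_0)) /=; rewrite coefC coef1 /= => h.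
have := congr1 (fun p : {poly rat} => size p) h; rewrite /= size_polyXn size_poly1.
by move=> hm; move: m0; rewrite -ltnS hm.
Qed.

Lemma two_neq0 : (2 : Ffrac) != 0.
Proof.
rewrite -(rmorph_nat (@tofrac Rpoly)) tofrac_eq0.
by rewrite -(rmorph_nat (@polyC _)) polyC_eq0 -(rmorph_nat (@polyC _)) polyC_eq0.
Qed.

Lemma qgood_qF : qgood qF.
Proof. by exists 'X. Qed.

Section Main.
Variable d : nat.
Hypothesis d0 : (0 < d)%N.
Local Notation Q := (qF ^+ d).

Lemma Q_neq0 : Q != 0.
Proof. exact: expf_neq0 qF_neq0. Qed.

Lemma hpQ m : (0 < m)%N -> Q ^+ m != 1.
Proof. by move=> m0; rewrite -exprM qF_pow_neq1 // muln_gt0 d0. Qed.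

Lemma qgoodQ : qgood Q.
Proof. exact: qgood_exp qgood_qF. Qed.

Definition th k : {poly Ffrac} := \prod_(i < k) ((1 + Q ^+ (2 * i + 1))%:P - Q ^+ i *: 'X).

Lemma gth (K : fieldType) (x pi q : K) : x != 0 ->
  1 + pi * pi * q - pi * (x + q / x) = (1 - x * pi) * (1 - q / x * pi).
Proof. move=> x0; field; by rewrite x0. Qed.

Lemma th_eval k x : x != 0 -> (th k).[x + Q / x] = qpoch x Q k * qpoch (Q / x) Q k.
Proof.
move=> x0; rewrite /th horner_prod /qpoch -big_split; apply: eq_bigr => i _ /=.
rewrite hornerD hornerN hornerC hornerZ hornerX.
have -> : Q ^+ (2 * i + 1) = Q ^+ i * Q ^+ i * Q by rewrite addn1 exprSr mul2n -addnn exprD.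
exact: gth.
Qed.

Lemma PG_th k : PG (th k).
Proof.
apply: PG_prod => i _; apply: PGB.
  apply: PGC; apply: qgood_good; apply: qgood_add; first exact: qgood1.
  apply: qgood_exp; exact: qgoodQ.
apply: PGZ; last exact: PGX.
apply: qgood_good; apply: qgood_exp; exact: qgoodQ.
Qed.

Definition ck k : Ffrac := 2 * Q ^+ k / ((qpoch Q Q k) ^+ 2 * (1 + Q ^+ k)).

Definition St (n : nat) (c : Ffrac) : {poly Ffrac} := \sum_(k < n) ck k *: th k - c%:P.

Lemma St_eval n c x : x != 0 ->
  (St n c).[x + Q / x] = \sum_(k < n) ck k * (qpoch x Q k * qpoch (Q / x) Q k) - c.
Proof.
move=> x0; rewrite /St hornerD hornerN hornerC horner_sum; congr (_ - _).
by apply: eq_bigr => k _; rewrite hornerZ th_eval.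
Qed.

Lemma good_ck k : good (ck k).
Proof.
apply: good_mul.
  apply: qgood_good; apply: qgood_mul; first exact: qgood_nat.
  apply: qgood_exp; exact: qgoodQ.
apply: good_invq; apply: qgood_mul.
  apply: qgood_exp; apply: qgood_prod => i _; apply: qgood_sub; first exact: qgood1.
  by apply: qgood_mul; [exact: qgoodQ | apply: qgood_exp; exact: qgoodQ].
by apply: qgood_add; [exact: qgood1 | apply: qgood_exp; exact: qgoodQ].
Qed.

Lemma PG_St n c : good c -> PG (St n c).
Proof.
move=> hc; apply: PGB; last exact: PGC.
by apply: PG_sum => k _; apply: PGZ; [exact: good_ck | exact: PG_th].
Qed.

Lemma St_root n s : (s < n)%N ->
  (St n ((-1) ^+ s)).[(Q ^+ s)^-1 + Q / (Q ^+ s)^-1] = 0.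
Proof.
move=> sn.
have U0 : Q ^+ s != 0 by apply: expf_neq0; exact: Q_neq0.
rewrite St_eval ?invr_eq0 //.
apply/eqP; rewrite subr_eq0 -(@Tsum Q Q_neq0 hpQ two_neq0 s n sn); apply/eqP.
apply: eq_bigr => k _; rewrite invrK [Q * _]mulrC /Tt /ck.
exact: gen_r.
Qed.
End Main.
Lemma fin (d r s t : nat) (A B f : Ffrac) : (0 < r)%N -> good f ->
  A - B = (1 - aF * qF ^+ (r + d * s)) * (aF * qF ^+ r - qF ^+ (d * t.+1)) * f ->
  congr_mod A B ((1 - aR * qR ^+ (r + d * s)) * a_minus_qpow (d%:Z - r%:Z + (d * t)%:Z)).
Proof.
move=> r0 hf eAB.
set Bz := (d%:Z - r%:Z + (d * t)%:Z).
have [κ [hκ eκ]] : exists κ, qgood κ /\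
    aF * qF ^+ r - qF ^+ (d * t.+1) = (a_minus_qpow Bz)%:F * κ.
  case E: Bz => [k|k] /=.
  - exists (qF ^+ r); split; first by apply: qgood_exp; exact: qgood_qF.
    have ek : (k + r = d * t.+1)%N by move: E; rewrite /Bz mulnS; lia.
    by rewrite tofracB tofracXn mulrBl -exprD ek.
  - exists (qF ^+ (d * t.+1)); split; first by apply: qgood_exp; exact: qgood_qF.
    have ek : (k.+1 + d * t.+1 = r)%N by move: E; rewrite /Bz mulnS NegzE; lia.
    by rewrite tofracB tofracM tofracXn tofrac1 mulrBl mul1r -mulrA -exprD ek.
have hg : good (κ * f) by apply: good_mul => //; exact: qgood_good.
case: hg => C [v [m [v0 eC]]].
exists C, (v%:P * aR ^+ m); split; first exact: den_neq0.
split; first by apply: P_coprime => //; rewrite addn_gt0 r0.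
rewrite eAB eκ -[RHS]mulrA -eC [in RHS]tofracM tofracB tofrac1 tofracM tofracXn -/aF -/qF.
by rewrite !mulrA.
Qed.

Lemma pow_inj (p : Ffrac) a b : p != 0 -> (forall m, (0 < m)%N -> p ^+ m != 1) ->
  p ^+ a = p ^+ b -> a = b.
Proof.
move=> p0 hp.
wlog ab : a b / (a <= b)%N.
  move=> H e; case: (leqP a b) => h; first exact: H.
  by apply/esym/H => //; apply: ltnW.
move=> e; have eb : b = (a + (b - a))%N by rewrite subnKC.
move: e; rewrite eb exprD -{1}[p ^+ a]mulr1 => /(mulfI (expf_neq0 _ p0)) /esym e1.
case E: (b - a)%N e1 => [|k] e1; first by rewrite addn0.
by move: (hp k.+1 (ltn0Sn _)); rewrite e1 eqxx.
Qed.

Lemma good_invM f g : good f^-1 -> good g^-1 -> good (f * g)^-1.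
Proof. by move=> hf hg; rewrite invfM; apply: good_mul. Qed.

Lemma good_qpow k : good (qF ^+ k).
Proof. apply: qgood_good; apply: qgood_exp; exact: qgood_qF. Qed.

Lemma good_qpowV k : good (qF ^+ k)^-1.
Proof. apply: good_invq; apply: qgood_exp; exact: qgood_qF. Qed.

Lemma good_x r : good (aF * qF ^+ r).
Proof. apply: good_mul; [exact: goodA | exact: good_qpow]. Qed.

Lemma good_xV r : good (aF * qF ^+ r)^-1.
Proof. apply: good_invM; [exact: good_invA | exact: good_qpowV]. Qed.

Lemma hornM3 (R : comNzRingType) (g : {poly R}) a b z :
  (g * ('X - a%:P) * ('X - b%:P)).[z] = g.[z] * (z - a) * (z - b).
Proof. by rewrite !hornerM !hornerXsubC. Qed.

Lemma gdiv (K : fieldType) (Q a W : K) : Q * W^-1 / a = Q / (a * W).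
Proof. rewrite invfM; ring. Qed.

Theorem corollary1p4 (d n r : nat) :
  (0 < d)%N -> (0 < n)%N -> (0 < r)%N -> coprime d n -> odd n ->
  congr_mod
    (\sum_(k < n)
       (2 * qpoch (aF * qF ^+ r) (qF ^+ d) k
          * qpoch (qF ^ (d%:Z - r%:Z) / aF) (qF ^+ d) k * qF ^+ (d * k))
       / ((qpoch (qF ^+ d) (qF ^+ d) k) ^+ 2 * (1 + qF ^+ (d * k))))
    ((-1) ^+ resid (- (r%:Q) / d%:Q) n)
    ((1 - aR * qR ^+ (r + d * resid (- (r%:Q) / d%:Q) n))
       * a_minus_qpow (d%:Z - r%:Z + (d * resid ((r%:Q - d%:Q) / d%:Q) n)%:Z)).
Proof.
move=> d0 n0 r0 cp on.
have dQ : (d%:Q != 0) by rewrite pnatr_eq0 -lt0n.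
case: (@exists_sol d n r n0 cp) => x0 [x0n hx0].
have es : resid (- (r%:Q) / d%:Q) n = x0.
  apply: (@resid_eq _ d n r%:Z x0) => //.
    by rewrite divfK // -pmulrn.
have et : resid ((r%:Q - d%:Q) / d%:Q) n = (n.-1 - x0)%N.
  apply: (@resid_eq _ d n (d%:Z - r%:Z) (n.-1 - x0)) => //.
    by rewrite divfK // rmorphB /= -!pmulrn opprB.
  by lia.
  have -> : d%:Z * (n.-1 - x0)%N%:Z + (d%:Z - r%:Z) = n%:Z * d%:Z - (d * x0 + r)%N%:Z.
    have e1 : (n.-1 - x0)%N%:Z = n%:Z - 1 - x0%:Z by lia.
    rewrite e1 PoszD PoszM; ring.
  apply: rpredB; first by apply: dvdz_mulr; apply: dvdzz.
  by rewrite dvdzE.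
rewrite es et.
set s := x0; set t := (n.-1 - x0)%N.
have tn : (t < n)%N by rewrite /t; lia.
have par : (-1) ^+ t = (-1) ^+ s :> Ffrac.
  rewrite -signr_odd -[in RHS]signr_odd; congr (_ ^+ _).
  have hst : (s + t = n.-1)%N by rewrite /t; lia.
  have : odd (s + t) = false.
    by rewrite hst; move: on; rewrite -{1}(prednK n0) /=; case: (odd n.-1).
  by rewrite oddD; case: (odd s); case: (odd t).
set Q := qF ^+ d.
set x := aF * qF ^+ r.
have q0 := qF_neq0.
have x0' : x != 0 by exact: mulf_neq0 aF_neq0 (expf_neq0 _ q0).
have Q0 : Q != 0 by exact: expf_neq0 _ q0.
have eA : \sum_(k < n)
       (2 * qpoch x Q k * qpoch (qF ^ (d%:Z - r%:Z) / aF) Q k * qF ^+ (d * k))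
       / ((qpoch Q Q k) ^+ 2 * (1 + qF ^+ (d * k)))
   = (St d n ((-1) ^+ s)).[x + Q / x] + (-1) ^+ s.
  rewrite St_eval // subrK; apply: eq_bigr => k _.
  have -> : qF ^ (d%:Z - r%:Z) / aF = Q / x.
    rewrite expfzDr // -exprnN /x /Q; exact: gdiv.
  by rewrite exprM /ck gen_r.
rewrite eA.
set z := x + Q / x.
set c := (-1) ^+ s.
have gc : good c by apply: good_exp; apply: good_opp; exact: good1.
have gQ : good Q by apply: good_qpow.
have gz : good z by apply: good_add; [exact: good_x | apply: good_mul => //; exact: good_xV].
set U := Q ^+ s; set V := Q ^+ t.
have U0 : U != 0 by exact: expf_neq0 _ Q0.
have V0 : V != 0 by exact: expf_neq0 _ Q0.
have qU : qgood U by apply: qgood_exp; apply: qgood_exp; exact: qgood_qF.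
have qV : qgood V by apply: qgood_exp; apply: qgood_exp; exact: qgood_qF.
set zs := U^-1 + Q / U^-1; set zt := V^-1 + Q / V^-1.
have gzs : good zs.
  rewrite /zs invrK; apply: good_add; first exact: good_invq.
  by apply: good_mul => //; exact: qgood_good.
have gzt : good zt.
  rewrite /zt invrK; apply: good_add; first exact: good_invq.
  by apply: good_mul => //; exact: qgood_good.
have hzs : z - zs = - (1 - x * U) * (x - Q * U) / (U * x) by exact: (@gzd _ x U Q x0' U0).
have hzt : z - zt = - (1 - x * V) * (x - Q * V) / (V * x) by exact: (@gzd _ x V Q x0' V0).
have r1 : (St d n c).[zs] = 0 by exact: (@St_root d d0 n s x0n).
have r2 : (St d n c).[zt] = 0 by rewrite /c -par; exact: (@St_root d d0 n t tn).
case: (@PG_factor _ _ (@PG_St d n c gc) gzs r1) => g1 [hg1 e1].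
have exU : aF * qF ^+ (r + d * s) = x * U by rewrite /x /U /Q -mulrA -exprM -exprD.
have eQV : qF ^+ (d * t.+1) = Q * V by rewrite /V /Q -exprS -exprM.
case: (eqVneq s t) => [est | nst].
  apply: (@fin d r s t _ _ (- g1.[z] / (U * x))) => //.
    apply: good_mul; first by apply: good_opp; exact: good_horner.
    by apply: good_invM; [exact: good_invq | exact: good_xV].
  rewrite addrK.
  rewrite e1.
  rewrite hornerM.
  rewrite hornerXsubC.
  rewrite hzs (@gas1 _ g1.[z] x U Q) exU eQV.
  by rewrite /V -est.
have zne : zt - zs != 0.
  rewrite /zt /zs (@gzz _ V U Q V0 U0); apply: mulf_neq0.
    rewrite subr_eq0; apply/negP => /eqP /invr_inj eVU.
    move: nst; rewrite eq_sym => /negP; apply; apply/eqP.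
    exact: (@pow_inj Q _ _ Q0 (@hpQ d d0) eVU).
  rewrite subr_eq0 eq_sym /V /U -exprS -exprD.
  exact: (@hpQ d d0).
have g1t : g1.[zt] = 0.
  move: r2; rewrite e1 hornerM hornerXsubC => /eqP; rewrite mulf_eq0 (negbTE zne) orbF.
  by move/eqP.
case: (@PG_factor _ _ hg1 gzt g1t) => g2 [hg2 e2].
apply: (@fin d r s t _ _ (g2.[z] * (x - Q * U) * (1 - x * V) / (U * x) / (V * x))) => //.
  apply: good_mul; last by apply: good_invM; [exact: good_invq | exact: good_xV].
  apply: good_mul; last by apply: good_invM; [exact: good_invq | exact: good_xV].
  apply: good_mul; last first.
    by apply: good_sub; [exact: good1 | apply: good_mul; [exact: good_x | exact: qgood_good]].
  apply: good_mul; first exact: good_horner.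
  by apply: good_sub; [exact: good_x | apply: good_mul => //; exact: qgood_good].
rewrite addrK.
rewrite e1 e2.
rewrite hornM3 (mulrAC g2.[z] (z - zt) (z - zs)) hzs hzt.
by rewrite (@gas2 _ g2.[z] x U V Q) exU eQV.
Qed.
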